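(* Let $u\in\mathcal{B}^N$, $m\in\mathbb{R}$, $\varepsilon>0$, $(r,\gamma)\in F(N,A,u,m)$, and $(t,\sigma)\in F(N,A,u,m-\varepsilon)$ such that $\sigma$ is a perfect matching in $\mathcal{F}(r)$ and $r_a>t_a$ for each $a\in A$. Suppose there is no $i\in N$ and $a\in A$ with $r_a>b_i>t_a$. Then there is $\Lambda>0$ such that (1) for each $0<\Lambda'\le\Lambda$, every bijection $\mu$ maximizing $\sum_{i\in N}\log\lambda_{i\mu(i)}(u,r,\Lambda')$ satisfies $u_i(r_{\mu(i)},\mu(i))=u_i(r_{\gamma'(i)},\gamma'(i))$ for all $i\in N$ and all $\gamma'$ with $(r,\gamma')\in F(N,A,u,m)$; and (2) $\lambda_{i\sigma(i)}(u,r,\Lambda)(r_{\sigma(i)}-t_{\sigma(i)})\ge\lambda_{ia}(u,r,\Lambda)(r_a-t_a)$ for all $i\in N$ and $a\in A$, i.e. $(r-t,\sigma)$ is envy-free in the economy with consumption space $\mathbb{R}_{++}\times A$ where agent $i$'s utility is $(x_a,a)\mapsto\lambda_{ia}(u,r,\Lambda)x_a$ and the total to distribute is $\sum_{a\in A}(r_a-t_a)$.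
   Context: Fix a finite set $\{\rho_1,\dots,\rho_k\}\subseteq\mathbb{R}_+$ with $\rho_1=0$. $N=\{1,\dots,n\}$ agents, $A$ a set of $n$ rooms. $\mathcal{B}$ is the set of utility functions $u_i(r_a,a)=v^i_a-r_a-\rho_i\max\{0,r_a-b_i\}$ with $v^i\in\mathbb{R}^A$, $b_i\ge0$, $\rho_i\in\{\rho_1,\dots,\rho_k\}$. An allocation for $(N,A,u,m)$ is $(r,\sigma)$ with $\sigma:N\to A$ a bijection, $r\in\mathbb{R}^A$, $\sum_ar_a=m$; envy-free means $u_i(r_{\sigma(i)},\sigma(i))\ge u_i(r_{\sigma(j)},\sigma(j))$ for all $i,j$; $F(N,A,u,m)$ is the set of envy-free allocations. $\lambda_{ia}(u,r):=1+\rho_i$ if $r_a>b_i$, else $1$. For $r$ with some envy-free $(r,\gamma)$: $\mathcal{F}(r)$ is the bipartite graph on $N\cup A$ with edge $(i,a)$ iff $u_i(r_{\gamma(i)},\gamma(i))=u_i(r_a,a)$, and a perfect matching in $\mathcal{F}(r)$ is a bijection $N\to A$ using only its edges; for $\Lambda>0$, $\lambda_{ia}(u,r,\Lambda):=\lambda_{ia}(u,r)$ if $u_i(r_{\gamma(i)},\gamma(i))=u_i(r_a,a)$ and $:=\Lambda$ otherwise. *)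

(* Defs.v *)
From HB Require Import structures.
From mathcomp Require Import all_boot all_order all_algebra.
From mathcomp Require Import all_classical all_reals all_analysis.
Set Implicit Arguments. Unset Strict Implicit. Unset Printing Implicit Defensive.
Import Order.TTheory GRing.Theory Num.Theory.
Local Open Scope ring_scope.

Section Defs.
Variables (R : realType) (N A : finType).
(* Parameters of the quasi-linear utilities with debt aversion:
   v i a = v^i_a, b i = b_i, rho i = rho_i. *)
Variables (v : N -> A -> R) (b rho : N -> R).

Definition util (i : N) (x : R) (a : A) : R :=
  v i a - x - rho i * Num.max 0 (x - b i).

Definition in_B (rhos : seq R) : Prop :=
  (forall i, 0 <= b i) /\ (forall i, rho i \in rhos).

Definition envy_free (r : A -> R) (sigma : N -> A) : Prop :=
  forall i j, util i (r (sigma j)) (sigma j) <= util i (r (sigma i)) (sigma i).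

Definition EF (m : R) (r : A -> R) (sigma : N -> A) : Prop :=
  bijective sigma /\ \sum_(a : A) r a = m /\ envy_free r sigma.

(* edge (i,a) of the graph F(r), relative to the envy-free (r, gamma) *)
Definition Fedge (r : A -> R) (gamma : N -> A) (i : N) (a : A) : Prop :=
  util i (r (gamma i)) (gamma i) = util i (r a) a.

Definition perfect_matching (r : A -> R) (gamma : N -> A) (mu : N -> A) : Prop :=
  bijective mu /\ forall i, Fedge r gamma i (mu i).

Definition lam (r : A -> R) (i : N) (a : A) : R :=
  if b i < r a then 1 + rho i else 1.

Definition lamL (r : A -> R) (gamma : N -> A) (L : R) (i : N) (a : A) : R :=
  if util i (r (gamma i)) (gamma i) == util i (r a) a then lam r i a else L.
End Defs.

(* Main.v *)
Require Import Defs.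
From HB Require Import structures.
From mathcomp Require Import all_boot all_order all_algebra.
From mathcomp Require Import all_classical all_reals all_analysis.
From mathcomp Require Import lra.
Import Order.TTheory GRing.Theory Num.Theory.
Local Open Scope ring_scope.

Theorem lemma8 (R : realType) (rhos : seq R)
  (Hrho0 : head 1 rhos = 0) (Hrhos : forall x, x \in rhos -> 0 <= x)
  (N A : finType) (v : N -> A -> R) (b rho : N -> R)
  (HB : in_B b rho rhos)
  (m eps : R) (Heps : 0 < eps)
  (r : A -> R) (gamma : N -> A) (Hr : EF v b rho m r gamma)
  (t : A -> R) (sigma : N -> A) (Ht : EF v b rho (m - eps) t sigma)
  (Hsig : perfect_matching v b rho r gamma sigma)
  (Hrt : forall a, t a < r a)
  (Hnob : ~ (exists (i : N) (a : A), t a < b i /\ b i < r a)) :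
  exists L : R, 0 < L /\
    (forall L' : R, 0 < L' -> L' <= L ->
       forall mu : N -> A, bijective mu ->
       (forall mu' : N -> A, bijective mu' ->
          \sum_(i : N) ln (lamL v b rho r gamma L' i (mu' i))
          <= \sum_(i : N) ln (lamL v b rho r gamma L' i (mu i))) ->
       forall gamma' : N -> A, EF v b rho m r gamma' ->
       forall i : N, util v b rho i (r (mu i)) (mu i)
                     = util v b rho i (r (gamma' i)) (gamma' i)) /\
    (forall (i : N) (a : A),
       lamL v b rho r gamma L i a * (r a - t a)
       <= lamL v b rho r gamma L i (sigma i) * (r (sigma i) - t (sigma i))).
Proof.
have rho0 : forall i, 0 <= rho i by move=> i; apply: Hrhos; exact: HB.2.
have lam1 : forall i a, 1 <= lam b rho r i a.
  by move=> i a; rewrite /lam; case: ifP => _; rewrite ?lerDl ?rho0.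
have lamU : forall i a, lam b rho r i a <= 1 + rho i.
  by move=> i a; rewrite /lam; case: ifP => _; rewrite ?lerDl ?rho0.
have key : forall i a, util v b rho i (t a) a - util v b rho i (r a) a
                        = lam b rho r i a * (r a - t a).
  move=> i a; rewrite /util /lam; have := Hrt a => hta.
  case: ifP => hb.
    have hbt : b i <= t a.
      rewrite leNgt; apply/negP => h; apply: Hnob; exists i, a; by [].
    rewrite !max_r ?subr_ge0 //; last by apply: ltW.
    lra.
  move/negbT: hb; rewrite -leNgt => hb.
  rewrite !max_l ?subr_le0 //; last by apply: le_trans (ltW hta) hb.
  lra.
set K := \sum_(i : N) ln (1 + rho i).
have K0 : 0 <= K by apply: sumr_ge0 => i _; apply: ln_ge0; rewrite lerDl rho0.
set S := \sum_(a : A) (r a - t a)^-1.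
set D := \sum_(a : A) (r a - t a).
have dpos : forall a, 0 < r a - t a by move=> a; rewrite subr_gt0.
have S0 : 0 <= S by apply: sumr_ge0 => a _; rewrite invr_ge0 ltW.
have D0 : 0 <= D by apply: sumr_ge0 => a _; rewrite ltW.
have SD0 : 0 < 1 + S * D by rewrite ltr_wpDr ?mulr_ge0.
have Sa : forall a, (r a - t a)^-1 <= S.
  move=> a; rewrite /S (bigD1 a) //= lerDl; apply: sumr_ge0 => c _.
  by rewrite invr_ge0 ltW.
have Da : forall a, r a - t a <= D.
  move=> a; rewrite /D (bigD1 a) //= lerDl; apply: sumr_ge0 => c _.
  by rewrite ltW.
exists (Num.min (expR (- K - 1)) (1 + S * D)^-1).
split; first by rewrite lt_min expR_gt0 invr_gt0 SD0.
split.
- move=> L' L'0 L'le mu bmu Hmax gamma' Hg' i.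
  have L'1 : L' <= 1.
    apply: (le_trans L'le); rewrite ge_min; apply/orP; right.
    by rewrite invr_le1 ?unitfE ?gt_eqF // lerDl mulr_ge0.
  have Hedge : forall j, Fedge v b rho r gamma j (mu j).
    move=> j; apply/eqP; apply: contraT => hne.
    have Hs := Hmax sigma Ht.1.
    have s0 : 0 <= \sum_(k : N) ln (lamL v b rho r gamma L' k (sigma k)).
      apply: sumr_ge0 => k _; rewrite /lamL.
      have := Hsig.2 k; rewrite /Fedge => ->; rewrite eqxx.
      exact: ln_ge0.
    have bnd : forall k, ln (lamL v b rho r gamma L' k (mu k)) <= ln (1 + rho k).
      move=> k; rewrite /lamL; case: ifP => _.
        rewrite ler_ln ?posrE ?lamU //; last by rewrite (lt_le_trans ltr01) ?lerDl.
        by rewrite (lt_le_trans ltr01).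
      apply: le_trans (ln_le0 L'1) _; apply: ln_ge0; by rewrite lerDl.
    have : \sum_(k : N) ln (lamL v b rho r gamma L' k (mu k)) <= - 1.
      rewrite (bigD1 j) //= /lamL (negbTE hne).
      have h1 : ln L' <= - K - 1.
        have -> : - K - 1 = ln (expR (- K - 1)) by rewrite expRK.
        rewrite ler_ln ?posrE ?expR_gt0 //.
        by apply: (le_trans L'le); rewrite ge_min lexx.
      have h2 : \sum_(k | k != j) ln (lamL v b rho r gamma L' k (mu k)) <= K.
        apply: le_trans (_ : \sum_(k | k != j) ln (1 + rho k) <= K).
          by apply: ler_sum => k _; apply: bnd.
        rewrite /K [X in _ <= X](bigD1 j) //= lerDr; apply: ln_ge0.
        by rewrite lerDl.
      lra.
    move=> hle; have := le_trans s0 (le_trans Hs hle); rewrite ler0N1.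
    by [].
  rewrite -(Hedge i).
  have [ginv gK ginvK] := Hr.1.
  have [g'inv g'K g'invK] := Hg'.1.
  apply/eqP; rewrite eq_le; apply/andP; split.
  + have := Hg'.2.2 i (g'inv (gamma i)); by rewrite g'invK.
  + have := Hr.2.2 i (ginv (gamma' i)); by rewrite ginvK.
- move=> i a.
  have es := Hsig.2 i; rewrite /Fedge in es.
  rewrite /lamL es eqxx.
  case: ifP => [/eqP ea | _].
  + rewrite -!key; have := Ht.2.2 i.
    have [sinv sK sinvK] := Ht.1.
    move=> /(_ (sinv a)); rewrite sinvK => h.
    rewrite -es -ea; lra.
  + set L := Num.min _ _.
    have L0 : 0 < L by rewrite lt_min expR_gt0 invr_gt0 SD0.
    apply: (@le_trans _ _ (r (sigma i) - t (sigma i))); last first.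
      by rewrite ler_peMl ?lam1 // ltW.
    have LSD : L * (1 + S * D) <= 1.
      rewrite -ler_pdivlMr // mul1r ge_min; apply/orP; right; exact: lexx.
    have Spos : 0 < S by apply: lt_le_trans (Sa a); rewrite invr_gt0.
    rewrite -(ler_pM2r Spos).
    apply: (@le_trans _ _ 1).
      apply: le_trans LSD; rewrite -mulrA ler_pM2l // mulrC.
      apply: le_trans (_ : S * D <= 1 + S * D); last by rewrite lerDr.
      by rewrite ler_pM2l // Da.
    have := Sa (sigma i); have := dpos (sigma i) => hp.
    move=> h1; have h2 : (r (sigma i) - t (sigma i)) * (r (sigma i) - t (sigma i))^-1 <= (r (sigma i) - t (sigma i)) * S by rewrite ler_pM2l.
    by rewrite mulfV ?gt_eqF in h2.
Qed.
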